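(* Let $A$ be a real $n\times n$ matrix acting on $H=\mathbb{R}^n$ (Euclidean inner product $\langle\cdot,\cdot\rangle$, norm $\|\cdot\|$) and let $\lambda$ be a real eigenvalue of $A$. Let $u_0\in\operatorname{Ker}(A-\lambda I)$ with $\|u_0\|=1$ and all components of $u_0$ nonzero, and let $\eta_0\in\mathbb{R}$ satisfy $$\langle |u_0|+\eta_0u_0,\,v\rangle=0\quad\text{for all } v\in\operatorname{Ker}(A^*-\lambda I).$$ Assume moreover the nondegeneracy condition: whenever $c\in\mathbb{R}$ and $w\in\operatorname{Ker}(A-\lambda I)$ satisfy $\langle u_0,w\rangle=0$ and $$Q\big(\Xi(u_0)w+\eta_0 w\big)+c\,Qu_0=0,$$ then $w=0$ and $c=0$. Then there exist a neighborhood $E$ of $0$ in $\mathbb{R}$ and continuous functions $\eta:E\to\mathbb{R}$, $u:E\to H$ with $u(0)=u_0$, $\eta(0)=\eta_0$, such that $$(A-\lambda I)u(\varepsilon)=\varepsilon\big(|u(\varepsilon)|+\eta(\varepsilon)u(\varepsilon)\big),\qquad \|u(\varepsilon)\|=1,\qquad \varepsilon\in E;$$ i.e. $\big(\lambda+\varepsilon(\eta(\varepsilon)+1),\ \lambda+\varepsilon(\eta(\varepsilon)-1)\big)$, $\varepsilon\in E$, describes a part of a Fučík curve of $A$ emanating from $(\lambda,\lambda)$ in the $\alpha\beta$-plane.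
   Context: $A^*$ is the transpose of $A$. $Q$ denotes the orthogonal projection of $\mathbb{R}^n$ onto $\operatorname{Ker}(A^*-\lambda I)$. For $u\in\mathbb{R}^n$, $|u|=[|u_1|,\dots,|u_n|]^t$ and $\Xi(u)=\operatorname{diag}(\operatorname{sgn}u_1,\dots,\operatorname{sgn}u_n)$. The Fučík spectrum of $A$ is the set of $(\alpha,\beta)\in\mathbb{R}^2$ for which $Au=\alpha u^+-\beta u^-$ has a nontrivial solution, where $u_i^+=\max\{u_i,0\}$, $u_i^-=\max\{-u_i,0\}$; with $\alpha=\varepsilon(\eta+1)+\lambda$, $\beta=\varepsilon(\eta-1)+\lambda$ this problem is equivalent to $(A-\lambda I)u=\varepsilon(|u|+\eta u)$. *)

(* Defs.v *)
From HB Require Import structures.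
From mathcomp Require Import all_boot all_order all_algebra.
From mathcomp Require Import all_classical all_reals all_analysis.
Set Implicit Arguments. Unset Strict Implicit. Unset Printing Implicit Defensive.
Import Order.TTheory GRing.Theory Num.Theory.
Local Open Scope ring_scope.

Definition dotv (R : realType) (n : nat) (u v : 'cV[R]_n) : R :=
  \sum_(i < n) u i 0 * v i 0.

Definition normv (R : realType) (n : nat) (u : 'cV[R]_n) : R :=
  Num.sqrt (dotv u u).

Definition absv (R : realType) (n : nat) (u : 'cV[R]_n) : 'cV[R]_n :=
  \col_i `|u i 0|.

Definition Xi (R : realType) (n : nat) (u : 'cV[R]_n) : 'M[R]_n :=
  diag_mx (\row_i Num.sg (u i 0)).

Definition in_ker_shift (R : realType) (n : nat) (M : 'M[R]_n) (lam : R)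
  (v : 'cV[R]_n) : Prop := (M - lam%:M) *m v = 0.

Definition is_orth_proj_ker (R : realType) (n : nat) (M : 'M[R]_n) (lam : R)
  (Q : 'cV[R]_n -> 'cV[R]_n) : Prop :=
  forall x, in_ker_shift M lam (Q x) /\
    (forall v, in_ker_shift M lam v -> dotv (x - Q x) v = 0).

(* Main.v *)
Require Import Defs.
From HB Require Import structures.
From mathcomp Require Import all_boot all_order all_algebra.
From mathcomp Require Import all_classical all_reals all_analysis.
From mathcomp Require Import ring lra.
Import Order.TTheory GRing.Theory Num.Theory numFieldNormedType.Exports.
Local Open Scope ring_scope.
Local Open Scope classical_set_scope.
Set Implicit Arguments. Unset Strict Implicit. Unset Printing Implicit Defensive.
HB.instance Definition _ (R : realType) (m n : nat) :=
  Complete.on 'M[R]_(m, n).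

Section Banach.
Variables (R : realType) (X : completeNormedModType R) (U : set X) (f : X -> X) (q : R).
Hypotheses (clU : closed U) (neU : U !=set0) (fU : forall x, U x -> U (f x))
  (q0 : 0 <= q) (q1 : q < 1) (lip : forall x y, U x -> U y -> `|f x - f y| <= q * `|x - y|).
Let fS : {homo f : x / U x >-> U x}. Proof. exact: fU. Qed.
HB.instance Definition _ := isFun.Build X X U U f fS.
Lemma my_banach : exists2 p, U p & p = f p.
Proof.
apply: banach_fixed_point => //.
exists (NngNum q0); split => //.
by move=> [x y] /= [Ux Uy]; exact: lip.
Qed.
End Banach.

Section Param.
Variables (R : realType) (X : completeNormedModType R) (T : R -> X -> X) (r d L : R).
Hypotheses (r0 : 0 < r) (d0 : 0 < d)
  (Tball : forall e y, `|e| <= d -> `|y| <= r -> `|T e y| <= r)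
  (Tlip : forall e y y', `|e| <= d -> `|y| <= r -> `|y'| <= r ->
      `|T e y - T e y'| <= 2^-1 * `|y - y'|)
  (Te : forall e e' y, `|e| <= d -> `|e'| <= d -> `|y| <= r ->
      `|T e y - T e' y| <= L * `|e - e'|).

Lemma param_fixed : exists yf : R -> X,
  (forall e, `|e| <= d -> `|yf e| <= r /\ yf e = T e (yf e)) /\
  (forall e e', `|e| <= d -> `|e'| <= d -> `|yf e - yf e'| <= 2 * L * `|e - e'|).
Proof.
have ex : forall e, exists y, `|e| <= d -> `|y| <= r /\ y = T e y.
  move=> e; have [ed|ed] := boolP (`|e| <= d); last by exists 0.
  have clU : closed [set y : X | `|y| <= r].
    have -> : [set y : X | `|y| <= r] = closed_ball 0 r.
      rewrite closed_ballE //; apply/funext => y /=; rewrite /closed_ball_ /=; by rewrite distrC subr0.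
    exact: closed_ball_closed.
  have [p Up pf] := @my_banach R X [set y | `|y| <= r] (T e) (2^-1)
    clU
    ltac:(by exists 0; rewrite /= normr0 ltW)
    ltac:(by move=> y /= yr; exact: Tball)
    ltac:(by rewrite invr_ge0)
    ltac:(by rewrite invf_lt1 // ltr1n)
    ltac:(by move=> y y' /= ? ?; exact: Tlip).
  by exists p.
have [yf Hyf] := choice ex.
exists yf; split => // e e' ed ed'.
have [n1 f1] := Hyf e ed; have [n2 f2] := Hyf e' ed'.
have H : `|yf e - yf e'| <= L * `|e - e'| + 2^-1 * `|yf e - yf e'|.
  have E : yf e - yf e' = T e (yf e) - T e' (yf e') by rewrite -f1 -f2.
  rewrite {1}E.
  have -> : T e (yf e) - T e' (yf e') = (T e (yf e) - T e' (yf e)) + (T e' (yf e) - T e' (yf e')) by rewrite addrA subrK.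
  apply: (le_trans (ler_normD _ _)); apply: lerD; [exact: Te | exact: Tlip ed' n1 n2].
have : 2^-1 * `|yf e - yf e'| <= L * `|e - e'| by rewrite -subr_ge0; move: H; lra.
by rewrite -ler_pdivlMl ?invr_gt0 // invrK mulrA.
Qed.
End Param.
Section Norms.
Variable R : realType.

Lemma mxnorm_ge p q (M : 'M[R]_(p, q)) i j : `|M i j| <= `|M|.
Proof. by rewrite [leRHS]/Num.Def.normr /= mx_normrE; apply/bigmax_geP; right; exists (i, j). Qed.

Lemma mxnorm_le p q (M : 'M[R]_(p, q)) b : 0 <= b -> (forall i j, `|M i j| <= b) -> `|M| <= b.
Proof. by move=> b0 H; rewrite [leLHS]/Num.Def.normr /= mx_normrE; apply: bigmax_le => // -[i j] _; exact: H. Qed.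

Lemma mulmx_norm p q (M : 'M[R]_(p, q)) (v : 'cV[R]_q) : `|M *m v| <= q%:R * `|M| * `|v|.
Proof.
apply: mxnorm_le; first by rewrite !mulr_ge0.
move=> i j; rewrite mxE (le_trans (ler_norm_sum _ _ _))//.
apply: le_trans (_ : \sum_(k < q) `|M| * `|v| <= _).
  by apply: ler_sum => k _; rewrite normrM ler_pM // ?mxnorm_ge.
by rewrite sumr_const card_ord -[in leRHS]mulrA mulr_natl.
Qed.

Lemma mx_bound p q (M : 'M[R]_(p, q)) : exists C, 1 <= C /\ forall v : 'cV[R]_q, `|M *m v| <= C * `|v|.
Proof.
exists (q%:R * `|M| + 1); split; first by rewrite lerDr mulr_ge0.
move=> v; apply: (le_trans (mulmx_norm M v)).
by rewrite ler_wpM2r // lerDl.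
Qed.
End Norms.
Section Lin.
Variables (R : realType) (n : nat).
Implicit Types (u v w x : 'cV[R]_n).

Lemma dotvE u v : dotv u v = (u^T *m v) 0 0.
Proof. by rewrite /dotv mxE; apply: eq_bigr => i _; rewrite mxE. Qed.

Lemma dotvC u v : dotv u v = dotv v u.
Proof. by rewrite /dotv; apply: eq_bigr => i _; rewrite mulrC. Qed.

Lemma dotvDl u v w : dotv (u + v) w = dotv u w + dotv v w.
Proof. by rewrite /dotv -big_split; apply: eq_bigr => i _; rewrite mxE mulrDl. Qed.

Lemma dotvZl a u w : dotv (a *: u) w = a * dotv u w.
Proof. by rewrite /dotv mulr_sumr; apply: eq_bigr => i _; rewrite mxE mulrA. Qed.

Lemma dotvNl u w : dotv (- u) w = - dotv u w.
Proof. by rewrite -scaleN1r dotvZl mulN1r. Qed.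

Lemma dotvBl u v w : dotv (u - v) w = dotv u w - dotv v w.
Proof. by rewrite dotvDl dotvNl. Qed.

Lemma dotv0l w : dotv 0 w = 0.
Proof. by rewrite /dotv big1 // => i _; rewrite mxE mul0r. Qed.

Lemma dotv_mul (M : 'M[R]_n) u v : dotv (M *m u) v = dotv u (M^T *m v).
Proof. by rewrite !dotvE trmx_mul mulmxA. Qed.

Lemma dotv_self0 w : dotv w w = 0 -> w = 0.
Proof.
move=> H; apply/matrixP => i j; rewrite ord1 mxE.
have /psumr_eq0P P : \sum_(k < n) w k 0 * w k 0 = 0 by [].
have : w i 0 * w i 0 = 0 by apply: P => // k _; rewrite -expr2 sqr_ge0.
by move/eqP; rewrite mulf_eq0 orbb => /eqP.
Qed.

Lemma dotv_ge0 w : 0 <= dotv w w.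
Proof. by rewrite /dotv sumr_ge0 // => i _; rewrite -expr2 sqr_ge0. Qed.

Variables (A : 'M[R]_n) (lam : R) (Q : 'cV[R]_n -> 'cV[R]_n).
Hypothesis HQ : is_orth_proj_ker A^T lam Q.

Let K v := in_ker_shift A^T lam v.

Lemma KD u v : K u -> K v -> K (u + v).
Proof. by rewrite /K /in_ker_shift mulmxDr => -> ->; rewrite addr0. Qed.
Lemma KZ a u : K u -> K (a *: u).
Proof. by rewrite /K /in_ker_shift => H; rewrite -scalemxAr H scaler0. Qed.
Lemma KN u : K u -> K (- u).
Proof. by move=> H; rewrite -scaleN1r; apply: KZ. Qed.

Lemma Korth0 w : K w -> (forall v, K v -> dotv w v = 0) -> w = 0.
Proof. by move=> Kw H; apply: dotv_self0; apply: H. Qed.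

Lemma Q_orth z : (forall v, K v -> dotv z v = 0) -> Q z = 0.
Proof.
move=> H; have [KQ HQz] := HQ z.
apply: dotv_self0.
have : dotv (z - Q z) (Q z) = 0 by apply: HQz.
by rewrite dotvBl H // => /eqP; rewrite sub0r oppr_eq0 => /eqP.
Qed.

Lemma QD x y : Q (x + y) = Q x + Q y.
Proof.
have [K1 H1] := HQ (x + y); have [K2 H2] := HQ x; have [K3 H3] := HQ y.
apply/eqP; rewrite -subr_eq0; apply/eqP; apply: Korth0.
  by apply: KD => //; apply: KN; apply: KD.
move=> v Kv.
have e1 := H1 v Kv; have e2 := H2 v Kv; have e3 := H3 v Kv.
rewrite !dotvBl !dotvDl in e1 e2 e3 *; lra.
Qed.

Lemma QZ a x : Q (a *: x) = a *: Q x.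
Proof.
have [K1 H1] := HQ (a *: x); have [K2 H2] := HQ x.
apply/eqP; rewrite -subr_eq0; apply/eqP; apply: Korth0.
  by apply: KD => //; apply: KN; apply: KZ.
move=> v Kv.
have e1 := H1 v Kv; have e2 := H2 v Kv.
rewrite !dotvBl !dotvZl in e1 e2 *; nra.
Qed.

Lemma Q0 : Q 0 = 0.
Proof. by have := QZ 0 0; rewrite !scale0r. Qed.

Lemma QN x : Q (- x) = - Q x.
Proof. by rewrite -scaleN1r QZ scaleN1r. Qed.

Lemma QB x y : Q (x - y) = Q x - Q y.
Proof. by rewrite QD QN. Qed.

Lemma QQ x : Q (Q x) = Q x.
Proof.
have [K1 H1] := HQ (Q x); have [K2 H2] := HQ x.
apply/eqP; rewrite -subr_eq0; apply/eqP; apply: Korth0.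
  by apply: KD => //; apply: KN.
move=> v Kv.
have e1 := H1 v Kv.
rewrite !dotvBl in e1 *; lra.
Qed.

Lemma Q_range x : Q ((A - lam%:M) *m x) = 0.
Proof.
apply: Q_orth => v Kv.
rewrite dotv_mul.
have -> : (A - lam%:M)^T = A^T - lam%:M by rewrite linearB /= tr_scalar_mx.
by rewrite Kv /dotv big1 // => i _; rewrite mxE mulr0.
Qed.

Definition Qm : 'M[R]_n := \matrix_(i, j) (Q (delta_mx j 0)) i 0.

Lemma Qsum (I : finType) (F : I -> 'cV[R]_n) : Q (\sum_i F i) = \sum_i Q (F i).
Proof. exact: (big_morph Q QD Q0). Qed.

Lemma QmE x : Qm *m x = Q x.
Proof.
have ex : x = \sum_(j < n) x j 0 *: delta_mx j 0.
  apply/matrixP => i k; rewrite ord1 summxE (bigD1 i) //= big1 ?addr0.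
    by rewrite !mxE !eqxx mulr1.
  by move=> j ji; rewrite !mxE eq_sym (negbTE ji) mulr0.
rewrite {2}ex Qsum; apply/matrixP => i k; rewrite ord1 mxE summxE.
by apply: eq_bigr => j _; rewrite QZ !mxE mulrC.
Qed.

End Lin.
Section Cont.
Variable R : realType.
Lemma lip_cont (V : normedModType R) (f : R -> V) k : 0 <= k ->
  (forall a b, `|f a - f b| <= k * `|a - b|) -> continuous f.
Proof.
move=> k0 H x; apply/cvgrPdist_lt => e e0.
have ek : 0 < e / (k + 1) by rewrite divr_gt0 // ltr_wpDl.
near=> t.
have Ht : `|x - t| < e / (k + 1).
  near: t; apply: (filterS _ (nbhsx_ballx x _ ek)) => t; rewrite -ball_normE /=. done.
apply: le_lt_trans (H x t) _.
have : k * `|x - t| <= k * (e / (k + 1)) by rewrite ler_wpM2l // ltW.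
move/le_lt_trans; apply.
rewrite mulrA ltr_pdivrMr ?ltr_wpDl // mulrC ltr_pM2l //; lra.
Unshelve. all: end_near.
Qed.

Lemma sum_cont (I : Type) (s : seq I) (F : I -> R -> R) :
  (forall i, continuous (F i)) -> continuous (fun e => \sum_(i <- s) F i e).
Proof.
move=> H; elim: s => [|a s IH].
  under eq_fun do rewrite big_nil; exact: cst_continuous.
under eq_fun do rewrite big_cons.
by move=> x; apply: continuousD; [exact: H | exact: IH].
Qed.

Definition clamp (d e : R) := Num.max (- d) (Num.min d e).

Lemma clamp_le d e : 0 <= d -> `|clamp d e| <= d.
Proof.
move=> d0; rewrite /clamp ler_norml; apply/andP; split.
  by rewrite le_max lexx.
by rewrite ge_max ge_min lexx /=; apply/andP; split => //; lra.
Qed.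

Lemma clamp_id d e : `|e| <= d -> clamp d e = e.
Proof.
rewrite ler_norml => /andP[h1 h2].
by rewrite /clamp (min_idPr h2) (max_idPr h1).
Qed.

Lemma max_lip (c a b : R) : `|Num.max c a - Num.max c b| <= `|a - b|.
Proof.
have h1 : a - b <= `|a - b| := ler_norm _.
have h2 : b - a <= `|a - b| by rewrite distrC ler_norm.
case: (leP c a) => ha; case: (leP c b) => hb;
rewrite ?(max_idPr ha) ?(max_idPr hb) ?(max_idPl (ltW ha)) ?(max_idPl (ltW hb));
rewrite ler_norml; apply/andP; split; lra.
Qed.

Lemma min_lip (c a b : R) : `|Num.min c a - Num.min c b| <= `|a - b|.
Proof.
have h1 : a - b <= `|a - b| := ler_norm _.
have h2 : b - a <= `|a - b| by rewrite distrC ler_norm.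
case: (leP c a) => ha; case: (leP c b) => hb;
rewrite ?(min_idPl ha) ?(min_idPl hb) ?(min_idPr (ltW ha)) ?(min_idPr (ltW hb));
rewrite ler_norml; apply/andP; split; lra.
Qed.

Lemma clamp_lip (d a b : R) : `|clamp d a - clamp d b| <= `|a - b|.
Proof. exact: le_trans (max_lip _ _ _) (min_lip _ _ _). Qed.

Lemma pos_min (n : nat) (F : 'I_n -> R) : (forall i, 0 < F i) ->
  exists m, 0 < m /\ m <= 1 /\ forall i, m <= F i.
Proof.
move=> H.
suff : forall s : seq 'I_n, exists m, 0 < m /\ m <= 1 /\ forall i, i \in s -> m <= F i.
  move=> /(_ (enum 'I_n)) [m [m0 [m1 Hm]]]; exists m; do 2 split => //.
  by move=> i; apply: Hm; rewrite mem_enum.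
elim => [|a s [m [m0 [m1 Hm]]]]; first by exists 1; do 2 split => //.
exists (Num.min m (F a)); split; first by rewrite lt_min m0 H.
split; first by rewrite ge_min m1.
move=> i; rewrite in_cons => /orP [/eqP -> | /Hm hi]; rewrite ge_min ?lexx ?orbT //.
by rewrite hi.
Qed.
End Cont.
Lemma choose_gen (R : realType) (C m : R) : 1 <= C -> 0 < m -> m <= 1 -> exists r d,
  0 < r /\ r <= 1 /\ r < m /\ 0 < d /\
  2 * C * C * r + 10 * (C * (C * C)) * d <= 2^-1 /\
  12 * (C * (C * (C * C))) * d <= r / 2.
Proof.
move=> c1 m0 m1.
have C0 : 0 < C by apply: lt_le_trans ltr01 c1.
have K1 : 1 <= C * C by apply: mulr_ege1.
have K4 : 1 <= C * (C * (C * C)) by apply: mulr_ege1 => //; apply: mulr_ege1.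
have K0 : 0 < C * C by apply: lt_le_trans ltr01 K1.
have K40 : 0 < C * (C * (C * C)) by apply: lt_le_trans ltr01 K4.
set K := C * C in K1 K0 *; set K4' := C * (C * (C * C)) in K4 K40 *.
exists (m / (8 * K)), (m / (8 * K) / (24 * K4')).
set r := m / (8 * K); set d := r / (24 * K4').
have hr : r * (8 * K) = m by rewrite /r mulfVK // mulf_neq0 // gt_eqF.
have r0 : 0 < r by rewrite /r divr_gt0 // mulr_gt0.
have hd : d * (24 * K4') = r by rewrite /d mulfVK // mulf_neq0 // gt_eqF.
have d0 : 0 < d by rewrite /d divr_gt0 // mulr_gt0.
have rK : r <= r * K by rewrite ler_peMr // ltW.
have r8 : 8 * r <= m.
  have -> : 8 * r = r * 8 by rewrite mulrC.
  by rewrite -hr mulrA; apply: ler_peMr => //; rewrite mulr_ge0 // ltW.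
split => //; split; first lra.
split; first lra.
split => //.
have a1 : 2 * C * C * r = m / 4 by rewrite -hr /K; field.
have a2 : C * K * d <= K4' * d.
  have -> : K4' * d = C * (C * K * d) by rewrite /K4' /K; ring.
  by apply: ler_peMl => //; apply: mulr_ge0; [apply: mulr_ge0; apply: ltW | apply: ltW].
have a3 : K4' * d = r / 24 by rewrite -hd; field.
have a4 : 12 * K4' * d = r / 2 by rewrite -hd; field.
split; last by rewrite a4.
rewrite a1; move: a2; rewrite a3 => a2.
have i2 : (2^-1 : R) = 1 / 2 by rewrite div1r.
rewrite i2; lra.
Qed.
Section Main.
Variables (R : realType) (n : nat) (A : 'M[R]_n) (lam : R)
  (Q : 'cV[R]_n -> 'cV[R]_n) (u0 : 'cV[R]_n) (eta0 : R).
Hypotheses (HQ : is_orth_proj_ker A^T lam Q) (Hu0 : in_ker_shift A lam u0)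
  (Hn : normv u0 = 1) (Hnz : forall i, u0 i 0 != 0)
  (Horth : forall v, in_ker_shift A^T lam v -> dotv (absv u0 + eta0 *: u0) v = 0)
  (Hnd : forall (c : R) (w : 'cV[R]_n), in_ker_shift A lam w -> dotv u0 w = 0 ->
      Q (Xi u0 *m w + eta0 *: w) + c *: Q u0 = 0 -> w = 0 /\ c = 0).

Definition S := Xi u0.

Lemma abs_near (x : 'cV[R]_n) : (forall i, `|x i 0| < `|u0 i 0|) -> absv (u0 + x) = S *m (u0 + x).
Proof.
move=> H; apply/matrixP => i j; rewrite ord1 /S /Xi mul_diag_mx !mxE.
have := H i; have := Hnz i.
case: (ltrgt0P (u0 i 0)) => // hu _ hx.
  have : - u0 i 0 < x i 0 by move: hx; rewrite ltr_norml => /andP[].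
  move=> h; rewrite gtr0_sg // mul1r gtr0_norm //; lra.
have : x i 0 < - u0 i 0 by move: hx; rewrite ltr_norml => /andP[].
move=> h; rewrite ltr0_sg // mulN1r ltr0_norm //; lra.
Qed.

Lemma absv_S : absv u0 = S *m u0.
Proof.
have := abs_near (x := 0) _; rewrite addr0; apply => i.
by rewrite mxE normr0 normr_gt0.
Qed.

Lemma Q_base : Q (S *m u0 + eta0 *: u0) = 0.
Proof. by apply: (Q_orth HQ) => v Kv; rewrite -absv_S; exact: Horth. Qed.

Definition Jm : 'M[R]_(n + 1) :=
  block_mx (A - lam%:M + Qm Q *m (S + eta0%:M)) (Qm Q *m u0) u0^T 0.

Definition xo (y : 'cV[R]_(n + 1)) : 'cV[R]_n := usubmx y.
Definition co (y : 'cV[R]_(n + 1)) : R := dsubmx y 0 0.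

Lemma JmE y : Jm *m y = col_mx ((A - lam%:M) *m xo y + Q (S *m xo y + eta0 *: xo y)
   + co y *: Q u0) (u0^T *m xo y).
Proof.
rewrite -{1}[y]vsubmxK mul_block_col mul0mx addr0; congr col_mx.
rewrite mulmxDl -mulmxA (QmE HQ) -mulmxA (QmE HQ) (mulmxDl S) mul_scalar_mx.
by rewrite [dsubmx y]mx11_scalar mul_mx_scalar (QZ HQ).
Qed.

Lemma Jm_inj (y : 'cV[R]_(n + 1)) : Jm *m y = 0 -> y = 0.
Proof.
rewrite JmE (_ : 0 = col_mx 0 0); last by rewrite col_mx0.
move=> /eq_col_mx [Ht Hb].
have Hd : dotv u0 (xo y) = 0 by rewrite dotvE Hb mxE.
have HQt : Q (S *m xo y + eta0 *: xo y) + co y *: Q u0 = 0.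
  have := congr1 Q Ht; rewrite (Q0 HQ) !(QD HQ) (Q_range HQ) add0r !(QQ HQ) (QZ HQ (co y)) (QQ HQ).
  by [].
have Hk : in_ker_shift A lam (xo y).
  by rewrite /in_ker_shift; move: Ht; rewrite -addrA HQt addr0.
have [x0 c0] := Hnd Hk Hd HQt.
rewrite -[y]vsubmxK -/(xo y) x0 [dsubmx y]mx11_scalar -/(co y) c0.
by apply/matrixP => i j; rewrite !mxE; case: splitP => k _; rewrite !mxE //; case: (_ == _); rewrite ?mulr0n ?mulr1n.
Qed.

Lemma inj_unit m (M : 'M[R]_m) : (forall y : 'cV[R]_m, M *m y = 0 -> y = 0) -> M \in unitmx.
Proof.
move=> H; rewrite -unitmx_tr -row_free_unit -kermx_eq0; apply/eqP/row_matrixP => i.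
rewrite row0; have := mulmx_ker M^T => /(congr1 (row i)); rewrite row_mul row0.
move=> /(congr1 trmx); rewrite trmx_mul trmxK trmx0 => /H /(congr1 trmx).
by rewrite trmxK trmx0.
Qed.

Lemma Jm_unit : Jm \in unitmx.
Proof. exact: inj_unit Jm_inj. Qed.


Definition Jinv := invmx Jm.
Definition wv (y : 'cV[R]_(n + 1)) : 'cV[R]_n :=
  S *m (u0 + xo y) + (eta0 + co y) *: (u0 + xo y).
Definition top (e : R) (y : 'cV[R]_(n + 1)) : 'cV[R]_n :=
  co y *: Q (xo y) - e *: (wv y - Q (wv y)).
Definition Tm (e : R) (y : 'cV[R]_(n + 1)) : 'cV[R]_(n + 1) :=
  - (Jinv *m col_mx (top e y) (0 : 'cV[R]_1)).

Lemma wv_split y : wv y = (S *m u0 + eta0 *: u0) + (S *m xo y + eta0 *: xo y)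
  + co y *: u0 + co y *: xo y.
Proof.
rewrite /wv mulmxDr; move: (S *m u0) (S *m xo y) => a b.
by apply/matrixP => i j; rewrite !mxE; ring.
Qed.

Lemma fixed_eq e y : y = Tm e y ->
  (A - lam%:M) *m (u0 + xo y) = e *: wv y.
Proof.
move=> Hy.
have HJ : Jm *m y = - col_mx (top e y) 0.
  by rewrite {1}Hy /Tm mulmxN mulmxA mulmxV ?Jm_unit // mul1mx.
move: HJ; rewrite JmE opp_col_mx oppr0 => /eq_col_mx [Ht _].
have Ht' : (A - lam%:M) *m xo y = - top e y - Q (S *m xo y + eta0 *: xo y) - co y *: Q u0.
  rewrite -Ht; move: ((A - lam%:M) *m xo y) (Q (S *m xo y + eta0 *: xo y)) (co y *: Q u0) => f a b.
  by apply/matrixP => i j; rewrite !mxE; ring.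
have Hw : (A - lam%:M) *m xo y + Q (wv y) = e *: (wv y - Q (wv y)).
  rewrite {1}wv_split (QD HQ) (QD HQ) (QD HQ) Q_base add0r (QZ HQ (co y)) (QZ HQ (co y)).
  rewrite Ht' /top; move: (e *: (wv y - Q (wv y))) => g.
  move: (Q (S *m xo y + eta0 *: xo y)) (Q u0) (Q (xo y)) => a b c.
  by apply/matrixP => i j; rewrite !mxE; ring.
have HQw : Q (wv y) = 0.
  have := congr1 Q Hw; rewrite (QD HQ) (Q_range HQ) add0r (QQ HQ) (QZ HQ) (QB HQ) (QQ HQ).
  by rewrite subrr scaler0.
move: Hw; rewrite HQw addr0 subr0 => <-.
by rewrite mulmxDr Hu0 add0r.
Qed.


Definition C := n%:R * `|Qm Q| + n%:R * `|S| + (n + 1)%:R * `|Jinv| + `|u0| + `|eta0| + 1.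

Let n0 {p q} (M : 'M[R]_(p, q)) : 0 <= q%:R * `|M| := mulr_ge0 (ler0n _ _) (normr_ge0 _).

Ltac Cb := rewrite /C; move: (n0 (Qm Q)) (n0 S) (n0 Jinv) (normr_ge0 u0) (normr_ge0 eta0); lra.

Lemma C1 : 1 <= C.
Proof. Cb. Qed.

Lemma C0 : 0 < C.
Proof. exact: lt_le_trans ltr01 C1. Qed.

Lemma Cge0 : 0 <= C.
Proof. exact: ltW C0. Qed.

Lemma nQ (v : 'cV[R]_n) : `|Q v| <= C * `|v|.
Proof. by rewrite -(QmE HQ); apply: (le_trans (mulmx_norm _ _)); rewrite ler_wpM2r //; Cb. Qed.

Lemma nS (v : 'cV[R]_n) : `|S *m v| <= C * `|v|.
Proof. by apply: (le_trans (mulmx_norm _ _)); rewrite ler_wpM2r //; Cb. Qed.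

Lemma nJ (z : 'cV[R]_(n + 1)) : `|Jinv *m z| <= C * `|z|.
Proof. by apply: (le_trans (mulmx_norm _ _)); rewrite ler_wpM2r //; Cb. Qed.

Lemma nu0 : `|u0| <= C.
Proof. Cb. Qed.

Lemma neta : `|eta0| <= C.
Proof. Cb. Qed.


Lemma nxo y : `|xo y| <= `|y|.
Proof. by apply: mxnorm_le => // i j; rewrite mxE; exact: mxnorm_ge. Qed.
Lemma nco y : `|co y| <= `|y|.
Proof. by rewrite /co mxE; exact: mxnorm_ge. Qed.
Lemma xoB y y' : xo (y - y') = xo y - xo y'.
Proof. by apply/matrixP => i j; rewrite !mxE. Qed.
Lemma coB y y' : co (y - y') = co y - co y'.
Proof. by rewrite /co !mxE. Qed.
Lemma xo0 : xo 0 = 0.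
Proof. by apply/matrixP => i j; rewrite !mxE. Qed.
Lemma co0 : co 0 = 0.
Proof. by rewrite /co !mxE. Qed.
Lemma ncol (z : 'cV[R]_n) : `|col_mx z (0 : 'cV[R]_1)| <= `|z|.
Proof.
apply: mxnorm_le => // i j; rewrite mxE; case: splitP => k _; first exact: mxnorm_ge.
by rewrite mxE normr0.
Qed.

Lemma nwv y : `|y| <= 1 -> `|wv y| <= 6 * (C * C).
Proof.
move=> y1; have c1 := C1.
have h1 : `|u0 + xo y| <= 2 * C.
  apply: le_trans (ler_normD _ _) _; have := nu0; have := nxo y; lra.
have h2 : `|eta0 + co y| <= 2 * C.
  apply: le_trans (ler_normD _ _) _; have := neta; have := nco y; lra.
have h3 : C * `|u0 + xo y| <= C * (2 * C) by rewrite ler_wpM2l // ltW // C0.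
have h4 : `|eta0 + co y| * `|u0 + xo y| <= (2 * C) * (2 * C) by rewrite ler_pM.
rewrite /wv; apply: le_trans (ler_normD _ _) _; rewrite normrZ.
have := nS (u0 + xo y); lra.
Qed.

Lemma nP (v : 'cV[R]_n) : `|v - Q v| <= 2 * C * `|v|.
Proof.
apply: le_trans (ler_normB _ _) _; have := nQ v; have := C1.
have := normr_ge0 v; nra.
Qed.

Lemma nwvd y y' : `|y| <= 1 -> `|y'| <= 1 -> `|wv y - wv y'| <= 5 * C * `|y - y'|.
Proof.
move=> y1 y1'; have c1 := C1.
have E : wv y - wv y' = S *m (xo y - xo y') + (eta0 + co y) *: (xo y - xo y')
   + (co y - co y') *: (u0 + xo y').
  rewrite /wv mulmxBr !mulmxDr; move: (S *m u0) (S *m xo y) (S *m xo y') => a b c.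
  by apply/matrixP => i j; rewrite !mxE; ring.
rewrite E; set D := `|y - y'|.
have hx : `|xo y - xo y'| <= D by rewrite -xoB nxo.
have hc : `|co y - co y'| <= D by rewrite -coB nco.
have h1 : `|S *m (xo y - xo y')| <= C * D.
  by apply: le_trans (nS _) _; rewrite ler_wpM2l // ltW // C0.
have h2 : `|eta0 + co y| <= 2 * C.
  apply: le_trans (ler_normD _ _) _; have := neta; have := nco y; lra.
have h3 : `|u0 + xo y'| <= 2 * C.
  apply: le_trans (ler_normD _ _) _; have := nu0; have := nxo y'; lra.
have h4 : `|eta0 + co y| * `|xo y - xo y'| <= (2 * C) * D by rewrite ler_pM.
have h5 : `|co y - co y'| * `|u0 + xo y'| <= D * (2 * C) by rewrite ler_pM.
apply: le_trans (ler_normD _ _) _; rewrite normrZ.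
apply: le_trans (lerD (ler_normD _ _) (lexx _)) _; rewrite normrZ.
lra.
Qed.


Lemma ntopd e y y' r : r <= 1 -> `|y| <= r -> `|y'| <= r ->
  `|top e y - top e y'| <= (2 * C * r + 10 * (C * C) * `|e|) * `|y - y'|.
Proof.
move=> r1 yr yr'; have c1 := C1.
have y1 : `|y| <= 1 by lra.
have y1' : `|y'| <= 1 by lra.
have E : top e y - top e y' = (co y - co y') *: Q (xo y) + co y' *: Q (xo y - xo y')
   - e *: ((wv y - wv y') - Q (wv y - wv y')).
  rewrite /top !(QB HQ); move: (Q (xo y)) (Q (xo y')) (Q (wv y)) (Q (wv y')) (wv y) (wv y') => a b c d f g.
  by apply/matrixP => i j; rewrite !mxE; ring.
rewrite E; set D := `|y - y'|.
have hx : `|xo y - xo y'| <= D by rewrite -xoB nxo.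
have hc : `|co y - co y'| <= D by rewrite -coB nco.
have hQx : `|Q (xo y)| <= C * r.
  apply: le_trans (nQ _) _; rewrite ler_wpM2l ?Cge0 //; exact: (le_trans (nxo _) yr).
have hQd : `|Q (xo y - xo y')| <= C * D.
  by apply: le_trans (nQ _) _; rewrite ler_wpM2l ?Cge0.
have hc' : `|co y'| <= r by apply: (le_trans (nco _) yr').
have hw : `|(wv y - wv y') - Q (wv y - wv y')| <= 2 * C * (5 * C * D).
  apply: le_trans (nP _) _; rewrite ler_wpM2l ?mulr_ge0 ?Cge0 //; exact: nwvd.
have h1 : `|co y - co y'| * `|Q (xo y)| <= D * (C * r) by rewrite ler_pM.
have h2 : `|co y'| * `|Q (xo y - xo y')| <= r * (C * D) by rewrite ler_pM.
have h3 : `|e| * `|(wv y - wv y') - Q (wv y - wv y')| <= `|e| * (2 * C * (5 * C * D)).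
  by rewrite ler_wpM2l.
apply: le_trans (ler_normB _ _) _; rewrite normrZ.
apply: le_trans (lerD (ler_normD _ _) (lexx _)) _; rewrite !normrZ.
have -> : (2 * C * r + 10 * (C * C) * `|e|) * D =
  D * (C * r) + r * (C * D) + `|e| * (2 * C * (5 * C * D)) by ring.
lra.
Qed.

Lemma ntope e e' y : `|y| <= 1 -> `|top e y - top e' y| <= 12 * (C * (C * C)) * `|e - e'|.
Proof.
move=> y1; have c1 := C1.
have E : top e y - top e' y = - ((e - e') *: (wv y - Q (wv y))).
  rewrite /top; move: (wv y - Q (wv y)) (co y *: Q (xo y)) => a b.
  by apply/matrixP => i j; rewrite !mxE; ring.
rewrite E normrN normrZ mulrC.
have hw : `|wv y - Q (wv y)| <= 2 * C * (6 * (C * C)).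
  apply: le_trans (nP _) _; rewrite ler_wpM2l ?mulr_ge0 ?Cge0 //; exact: nwv.
have -> : 12 * (C * (C * C)) = 2 * C * (6 * (C * C)) by ring.
by rewrite ler_wpM2r.
Qed.

Lemma top00 : top 0 0 = 0.
Proof. by rewrite /top co0 scale0r scale0r subr0. Qed.

Lemma TmB e e' y y' : Tm e y - Tm e' y' = - (Jinv *m col_mx (top e y - top e' y') (0 : 'cV[R]_1)).
Proof.
have -> : col_mx (top e y - top e' y') (0 : 'cV[R]_1) = col_mx (top e y) 0 - col_mx (top e' y') 0.
  by apply/matrixP => i j; rewrite !mxE; case: splitP => k _; rewrite !mxE // subr0.
rewrite mulmxBr /Tm; move: (Jinv *m col_mx (top e y) 0) (Jinv *m col_mx (top e' y') 0) => a b.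
by apply/matrixP => i j; rewrite !mxE; ring.
Qed.

Lemma nTm e e' y y' : `|Tm e y - Tm e' y'| <= C * `|top e y - top e' y'|.
Proof.
rewrite TmB normrN; apply: le_trans (nJ _) _; rewrite ler_wpM2l ?Cge0 //; exact: ncol.
Qed.

Lemma Tm00 : Tm 0 0 = 0.
Proof. by rewrite /Tm top00 col_mx0 mulmx0 oppr0. Qed.


Section Est.
Variables (r d : R).
Hypotheses (r0 : 0 < r) (r1 : r <= 1) (d0 : 0 < d)
  (hq : 2 * C * C * r + 10 * (C * (C * C)) * d <= 2^-1)
  (hb : 12 * (C * (C * (C * C))) * d <= r / 2).

Lemma Tlip e y y' : `|e| <= d -> `|y| <= r -> `|y'| <= r ->
  `|Tm e y - Tm e y'| <= 2^-1 * `|y - y'|.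
Proof.
move=> ed yr yr'; apply: le_trans (nTm _ _ _ _) _.
have := ntopd e r1 yr yr'.
move=> /(ler_wpM2l Cge0); move/le_trans; apply.
rewrite (mulrA C); apply: (ler_wpM2r (normr_ge0 _)).
have : C * (10 * (C * C) * `|e|) <= C * (10 * (C * C) * d).
  by rewrite ler_wpM2l ?Cge0 // ler_wpM2l // mulr_ge0 // mulr_ge0 ?Cge0.
move: hq; nra.
Qed.

Lemma T0 e : `|e| <= d -> `|Tm e 0| <= r / 2.
Proof.
move=> ed; rewrite -[Tm e 0]subr0 -{2}Tm00; apply: le_trans (nTm _ _ _ _) _.
have := ntope e 0 (y := 0); rewrite normr0 subr0 => /(_ ler01).
move=> /(ler_wpM2l Cge0); move/le_trans; apply.
have : 12 * (C * (C * C)) * `|e| <= 12 * (C * (C * C)) * d.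
  by rewrite ler_wpM2l // !mulr_ge0 ?Cge0.
move: hb; have := Cge0; nra.
Qed.

Lemma Tball e y : `|e| <= d -> `|y| <= r -> `|Tm e y| <= r.
Proof.
move=> ed yr; have -> : Tm e y = (Tm e y - Tm e 0) + Tm e 0 by rewrite subrK.
apply: le_trans (ler_normD _ _) _.
have := Tlip ed yr (y' := 0); rewrite normr0 subr0 => /(_ (ltW r0)) h1.
have := T0 ed; lra.
Qed.

Lemma Te e e' y : `|e| <= d -> `|e'| <= d -> `|y| <= r ->
  `|Tm e y - Tm e' y| <= 12 * (C * (C * (C * C))) * `|e - e'|.
Proof.
move=> ed ed' yr; apply: le_trans (nTm _ _ _ _) _.
have := ntope e e' (y := y) (le_trans yr r1).
move=> /(ler_wpM2l Cge0); move/le_trans; apply.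
by have -> : C * (12 * (C * (C * C)) * `|e - e'|) = 12 * (C * (C * (C * C))) * `|e - e'| by ring.
Qed.

End Est.


Lemma choose_rd : exists m r d, 0 < m /\ (forall i, m <= `|u0 i 0|) /\
  0 < r /\ r <= 1 /\ r < m /\ 0 < d /\
  2 * C * C * r + 10 * (C * (C * C)) * d <= 2^-1 /\
  12 * (C * (C * (C * C))) * d <= r / 2.
Proof.
have Hp : forall i : 'I_n, 0 < (`|u0 i 0| : R) by move=> i; rewrite normr_gt0 Hnz.
have [m [m0 [m1 Hm]]] := @pos_min R n (fun i : 'I_n => (`|u0 i 0| : R)) Hp.
have [r [d H]] := choose_gen C1 m0 m1.
by exists m, r, d.
Qed.


Lemma absvZ (a : R) (v : 'cV[R]_n) : 0 <= a -> absv (a *: v) = a *: absv v.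
Proof. by move=> a0; apply/matrixP => i j; rewrite !mxE normrM ger0_norm. Qed.

Lemma main : exists (E : set R) (eta : R -> R) (u : R -> 'cV[R]_n),
    nbhs (0 : R) E /\
    {within E, continuous eta} /\ {within E, continuous u} /\
    u 0 = u0 /\ eta 0 = eta0 /\
    (forall eps, E eps ->
       (A - lam%:M) *m u eps = eps *: (absv (u eps) + eta eps *: u eps) /\
       normv (u eps) = 1).
Proof.
have [m [r [d [m0 [Hm [r0 [r1 [rm [d0 [hq hb]]]]]]]]]] := choose_rd.
have Tb : forall e y, `|e| <= d -> `|y| <= r -> `|Tm e y| <= r.
  by move=> e y ed yr; exact: (Tball r0 r1 hq hb ed yr).
have Tl : forall e y y', `|e| <= d -> `|y| <= r -> `|y'| <= r ->
    `|Tm e y - Tm e y'| <= 2^-1 * `|y - y'|.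
  by move=> e y y' ed yr yr'; exact: (Tlip r1 hq ed yr yr').
have Tee : forall e e' y, `|e| <= d -> `|e'| <= d -> `|y| <= r ->
    `|Tm e y - Tm e' y| <= 12 * (C * (C * (C * C))) * `|e - e'|.
  by move=> e e' y ed ed' yr; exact: (@Te r d r1 e e' y ed ed' yr).
have [yf [Hfix Hlip]] := param_fixed r0 Tb Tl Tee.
set L := 12 * (C * (C * (C * C))) in Hlip.
have L0 : 0 <= L.
  by rewrite /L; apply: mulr_ge0 => //; apply: mulr_ge0; rewrite ?Cge0 //;
     apply: mulr_ge0; rewrite ?Cge0 //; apply: mulr_ge0; rewrite ?Cge0.
have d00 : `|0 : R| <= d by rewrite normr0 ltW.
have yf0 : yf 0 = 0.
  have [n0' f0] := Hfix 0 d00.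
  have E : yf 0 - 0 = Tm 0 (yf 0) - Tm 0 0 by rewrite -f0 Tm00.
  have : `|yf 0 - 0| <= 2^-1 * `|yf 0 - 0|.
    by rewrite {1}E; apply: Tl => //; rewrite normr0 ltW.
  rewrite subr0 => h; apply: normr0_eq0; apply/eqP; rewrite eq_le normr_ge0 andbT.
  have := normr_ge0 (yf 0); lra.
pose yc e := yf (clamp d e).
have ycr e : `|yc e| <= r by have [] := Hfix _ (clamp_le e (ltW d0)).
have yclip a b : `|yc a - yc b| <= 2 * L * `|a - b|.
  apply: le_trans (Hlip _ _ (clamp_le a (ltW d0)) (clamp_le b (ltW d0))) _.
  by rewrite ler_wpM2l ?clamp_lip // mulr_ge0.
pose uf e := u0 + xo (yc e).
pose etaf e := eta0 + co (yc e).
have ufx e i : `|xo (yc e) i 0| < `|u0 i 0|.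
  apply: le_lt_trans (mxnorm_ge _ i 0) _.
  apply: le_lt_trans (nxo _) _; apply: le_lt_trans (ycr e) _.
  by apply: lt_le_trans rm _.
have ufabs e : absv (uf e) = S *m uf e by apply: abs_near.
have ufpos e : 0 < dotv (uf e) (uf e).
  rewrite lt_def dotv_ge0 andbT; apply/eqP => /dotv_self0 H0.
  have Hz : u0 = 0.
    apply/matrixP => i j; exfalso; have := ufx e i.
    have := congr1 (fun M : 'cV[R]_n => M i 0) H0; rewrite /= !mxE => h.
    have -> : yc e (lshift 1 i) 0 = - u0 i 0 by lra.
    by rewrite normrN ltxx.
  by move: Hn; rewrite Hz /normv dotv0l sqrtr0 => /eqP; rewrite eq_sym oner_eq0.
pose N e := normv (uf e).
have Npos e : 0 < N e by rewrite /N /normv sqrtr_gt0.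
pose uu e := (N e)^-1 *: uf e.
have ycont : continuous yc by apply: (@lip_cont _ _ yc (2 * L)) => //; rewrite mulr_ge0.
have ufl a b : `|uf a - uf b| <= 2 * L * `|a - b|.
  have -> : uf a - uf b = xo (yc a - yc b).
    by rewrite xoB /uf; move: (xo (yc a)) (xo (yc b)) => p q; apply/matrixP => i j; rewrite !mxE; ring.
  exact: le_trans (nxo _) (yclip a b).
have ufcont : continuous uf by apply: (@lip_cont _ _ uf (2 * L)) => //; rewrite mulr_ge0.
have etacont : continuous etaf.
  apply: (@lip_cont _ _ etaf (2 * L)) => //; first by rewrite mulr_ge0.
  move=> a b; have -> : etaf a - etaf b = co (yc a - yc b) by rewrite coB /etaf; ring.
  exact: le_trans (nco _) (yclip a b).
have coordcont i : continuous (fun e => uf e i 0).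
  apply: (@lip_cont _ _ _ (2 * L)) => //; first by rewrite mulr_ge0.
  move=> a b; apply: le_trans (ufl a b).
  by have := mxnorm_ge (uf a - uf b) i 0; rewrite !mxE.
have dcont : continuous (fun e => dotv (uf e) (uf e)).
  rewrite /dotv; apply: sum_cont => i x; apply: continuousM; exact: coordcont.
have Ncont : continuous N.
  move=> x; rewrite /N /normv.
  exact: (continuous_comp (dcont x) (@sqrt_continuous R _)).
have uucont : continuous uu.
  move=> x; rewrite /uu; apply: (@continuousZ _ _ _ (fun e => (N e)^-1) uf); last exact: ufcont.
  by apply: continuousV; [rewrite gt_eqF | exact: Ncont].
have yc0 : yc 0 = 0 by rewrite /yc clamp_id.
exists (ball 0 d), etaf, uu; split; first exact: nbhsx_ballx.
split; first exact: continuous_subspaceT.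
split; first exact: continuous_subspaceT.
split.
  have U0 : uf 0 = u0 by rewrite /uf yc0 xo0 addr0.
  by rewrite /uu /N U0 Hn invr1 scale1r.
split; first by rewrite /etaf yc0 co0 addr0.
move=> e; rewrite -ball_normE /= sub0r normrN => ed.
have ce : clamp d e = e by rewrite clamp_id // ltW.
have fx : yc e = Tm e (yc e) by rewrite /yc ce; have [] := Hfix e (ltW ed).
have Heq := fixed_eq fx.
have Hw : wv (yc e) = absv (uf e) + etaf e *: uf e by rewrite ufabs.
split.
  rewrite /uu -scalemxAr Heq Hw absvZ; last by rewrite invr_ge0 ltW.
  move: (absv (uf e)) (uf e) ((N e)^-1) (etaf e) => p q a b.
  by apply/matrixP => i j; rewrite !mxE; ring.
rewrite /uu /normv dotvZl dotvC dotvZl.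
have D0 := ufpos e.
have -> : (N e)^-1 * ((N e)^-1 * dotv (uf e) (uf e)) = 1.
  rewrite /N /normv mulrA -expr2 exprVn sqr_sqrtr ?mulVf ?gt_eqF //; exact: ltW.
by rewrite sqrtr1.
Qed.

End Main.

Theorem theorem3 (R : realType) (n : nat) (A : 'M[R]_n) (lam : R)
  (Q : 'cV[R]_n -> 'cV[R]_n) (u0 : 'cV[R]_n) (eta0 : R) :
  (exists v : 'cV[R]_n, v != 0 /\ A *m v = lam *: v) ->
  is_orth_proj_ker A^T lam Q ->
  in_ker_shift A lam u0 ->
  normv u0 = 1 ->
  (forall i, u0 i 0 != 0) ->
  (forall v, in_ker_shift A^T lam v -> dotv (absv u0 + eta0 *: u0) v = 0) ->
  (forall (c : R) (w : 'cV[R]_n), in_ker_shift A lam w -> dotv u0 w = 0 ->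
      Q (Xi u0 *m w + eta0 *: w) + c *: Q u0 = 0 -> w = 0 /\ c = 0) ->
  exists (E : set R) (eta : R -> R) (u : R -> 'cV[R]_n),
    nbhs (0 : R) E /\
    {within E, continuous eta} /\ {within E, continuous u} /\
    u 0 = u0 /\ eta 0 = eta0 /\
    (forall eps, E eps ->
       (A - lam%:M) *m u eps = eps *: (absv (u eps) + eta eps *: u eps) /\
       normv (u eps) = 1).
Proof.
move=> _ HQ Hu0 Hn Hnz Horth Hnd.
exact: (main HQ Hu0 Hn Hnz Horth Hnd).
Qed.
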